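(* Let $n=2k$ with $k>2$ an integer, let $u\in\mathbb{Z}_n^\times$, and let $\mathcal{B}$ be the set of bases of a rank-$3$ matroid on the ground set $\mathbb{Z}_n$ invariant under the translation action of $\mathbb{Z}_n$. Then $f_{u,ku}\subseteq\mathcal{B}$ if and only if $f_{u,(k+1)u}\subseteq\mathcal{B}$.
   Context: $\mathbb{Z}_n$ acts on $\binom{\mathbb{Z}_n}{3}$ by $x\cdot\{a,b,c\}=\{x+a,x+b,x+c\}$. For $i,j\in\mathbb{Z}_n$ with $0,i,j$ pairwise distinct, $f_{i,j}=\{\{a,a+i,a+j\}\mid a\in\mathbb{Z}_n\}$. A matroid on ground set $\mathbb{Z}_n$ is invariant if its basis set is preserved by this action. $\mathbb{Z}_n^\times$ denotes the units of $\mathbb{Z}_n$. *)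

(* Defs.v *)
From mathcomp Require Import all_boot all_algebra.
Set Implicit Arguments. Unset Strict Implicit. Unset Printing Implicit Defensive.
Import GRing.Theory.
Local Open Scope ring_scope.

Definition is_matroid_bases (T : finType) (B : {set {set T}}) : Prop :=
  B != set0 /\
  forall B1 B2, B1 \in B -> B2 \in B -> forall x, x \in B1 :\: B2 ->
    exists2 y, y \in B2 :\: B1 & (B1 :\ x) :|: [set y] \in B.

Definition is_rank_matroid_bases (T : finType) (r : nat) (B : {set {set T}}) : Prop :=
  is_matroid_bases B /\ forall b, b \in B -> #|b| = r.

Definition translate (n : nat) (x : 'Z_n) (A : {set 'Z_n}) : {set 'Z_n} :=
  [set x + a | a in A].

Definition translation_invariant (n : nat) (B : {set {set 'Z_n}}) : Prop :=
  forall x : 'Z_n, [set translate x b | b in B] = B.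

Definition orbit_f (n : nat) (i j : 'Z_n) : {set {set 'Z_n}} :=
  [set [set a; a + i; a + j] | a : 'Z_n].

(* Main.v *)
Require Import Defs.
From mathcomp Require Import all_boot all_algebra.
From mathcomp Require Import ring zify.
Import GRing.Theory.
Local Open Scope ring_scope.

Lemma set3C12 (T : finType) (a b c : T) : [set a; b; c] = [set b; a; c].
Proof. apply/setP => z; rewrite !inE; by case: (z == a); case: (z == b). Qed.
Lemma set3C23 (T : finType) (a b c : T) : [set a; b; c] = [set a; c; b].
Proof. apply/setP => z; rewrite !inE; by case: (z == a); case: (z == b); case: (z == c). Qed.

Lemma set3D (T : finType) (a b c : T) : b != a -> b != c -> [set a; b; c] :\ b = [set a; c].
Proof.
move=> h1 h2; apply/setP => z; rewrite !inE.
case: (eqVneq z b) => [->|nz] /=; first by rewrite (negbTE h1) (negbTE h2).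
by rewrite orbF.
Qed.

Lemma neqE (n : nat) (r p q : 'Z_n) : p - q = r -> r != 0 -> p != q.
Proof. by move=> <-; rewrite subr_eq0. Qed.

Lemma inv_in (n : nat) (B : {set {set 'Z_n}}) (hinv : translation_invariant B)
  x S : S \in B -> translate x S \in B.
Proof. by move=> h; rewrite -(hinv x); apply: imset_f. Qed.

Lemma translate3 (n : nat) (x a b c : 'Z_n) :
  translate x [set a; b; c] = [set x + a; x + b; x + c].
Proof. by rewrite /translate !imsetU !imset_set1. Qed.

Lemma generic (n : nat) (B : {set {set 'Z_n}}) (hB : is_rank_matroid_bases 3 B)
  (hinv : translation_invariant B) (v w : 'Z_n) (hw : w + w = 0)
  (h0 : v != 0) (h1 : v + v != 0) (h2 : v + v != w) (h3 : v != w)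
  (H : forall a, [set a; a + v; a + w] \in B) :
  forall a, [set a; a + v; a + (v + w)] \in B.
Proof.
move=> a; case: (boolP ([set a; a + v; a + (v + w)] \in B)) => // G.
have [[_ exch] _] := hB.
have HB1 := H (a + v).
have HB2 := H a.
have d1 : a + v + v != a.
  by apply: (@neqE _ (v + v)%R) => //; ring.
have d2 : a + v + v != a + v.
  by apply: (@neqE _ (v)) => //; ring.
have d3 : a + v + v != a + w.
  by apply: (@neqE _ (v + v - w)%R); [ring | rewrite subr_eq0].
have d4 : a + v + v != a + v + w.
  by apply: (@neqE _ (v - w)%R); [ring | rewrite subr_eq0].
have Hx : a + v + v \in [set a + v; a + v + v; a + v + w] :\: [set a; a + v; a + w].
  by rewrite !inE eqxx /= orbT andbT (negbTE d1) (negbTE d2) (negbTE d3).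
have [y Hy HyB] := exch _ _ HB1 HB2 _ Hx.
rewrite set3D // in HyB.
move: Hy; rewrite !inE => /andP [Hy1 Hy2].
move: Hy2; case/orP => [/orP [] | ] /eqP ey; subst y.
- case/negP: G.
  have -> : [set a; a + v; a + (v + w)] = [set a + v; a + v + w; a].
    by rewrite set3C12 set3C23 addrA.
  exact: HyB.
- by move: Hy1; rewrite eqxx.
- case/negP: G.
  have := @inv_in _ _ hinv w _ HyB.
  rewrite translate3.
  have -> : w + (a + v + w) = a + v + (w + w) by ring.
  rewrite hw addr0.
  have -> : w + (a + w) = a + (w + w) by ring.
  rewrite hw addr0.
  have -> : w + (a + v) = a + (v + w) by ring.
  by rewrite set3C12 set3C23 set3C12.
Qed.

Theorem mainTheorem13 (k : nat) (hk : (2 < k)%N) (u : 'Z_(2 * k))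
  (hu : u \is a GRing.unit) (B : {set {set 'Z_(2 * k)}})
  (hB : is_rank_matroid_bases 3 B) (hinv : translation_invariant B) :
  orbit_f u (u *+ k) \subset B <-> orbit_f u (u *+ k.+1) \subset B.
Proof.
have hn : (1 < 2 * k)%N by lia.
set w := u *+ k.
have hw : w + w = 0.
  by rewrite /w -mulrnDr addnn -mul2n -mulr_natr pchar_Zp // mulr0.
have natE : forall m1 m2, (m1 < 2 * k)%N -> (m2 < 2 * k)%N ->
    u * m1%:R = u * m2%:R -> m1 = m2.
  move=> m1 m2 h1 h2 /(mulrI hu) /(congr1 (@nat_of_ord _)).
  by rewrite !val_Zp_nat // !modn_small.
have hw' : w = u * k%:R by rewrite /w mulr_natr.
have h0 : u != 0 by apply: contraTneq hu => ->; rewrite unitr0.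
have h1 : u + u != 0.
  apply/eqP => e; have := natE 2%N 0%N (ltac:(lia)) (ltac:(lia)).
  by rewrite mulr0 -e -mulr2n mulr_natr => /(_ erefl).
have h2 : u + u != w.
  apply/eqP => e; have := natE 2%N k (ltac:(lia)) (ltac:(lia)).
  rewrite -hw' -e -mulr2n mulr_natr => /(_ erefl); lia.
have h3 : u != w.
  apply/eqP => e; have := natE 1%N k (ltac:(lia)) (ltac:(lia)).
  rewrite -hw' -e mulr1 => /(_ erefl); lia.
have mw : - w = w by apply/eqP; rewrite eq_sym -addr_eq0 hw.
have fromsub : forall i j, orbit_f i j \subset B -> forall a, [set a; a + i; a + j] \in B.
  by move=> i j /subsetP hs a; apply: hs; apply: imset_f.
have tosub : forall i j, (forall a, [set a; a + i; a + j] \in B) -> orbit_f i j \subset B.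
  by move=> i j h; apply/subsetP => S /imsetP [a _ ->].
have eS : u *+ k.+1 = u + w by rewrite mulrS.
rewrite eS; split.
- move/fromsub => H; apply: tosub.
  exact: (@generic _ _ hB hinv u w hw h0 h1 h2 h3 H).
- move/fromsub => H; apply: tosub => a.
  have H' : forall c, [set c; c + - u; c + w] \in B.
    move=> c; have := H (c - u).
    have -> : c - u + u = c by ring.
    have -> : c - u + (u + w) = c + w by ring.
    by rewrite set3C12.
  have := @generic _ _ hB hinv (- u) w hw.
  rewrite oppr_eq0 h0 -opprD oppr_eq0 h1 -(inj_eq (@oppr_inj _)) opprK mw h2.
  have h3' : - u != w by rewrite -{1}mw (inj_eq (@oppr_inj _)).
  rewrite h3'.
  move=> /(_ isT isT isT isT H' (a + u)).
  have -> : a + u + - u = a by ring.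
  have -> : a + u + (- u + w) = a + w by ring.
  by rewrite set3C12.
Qed.
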